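(* In HotStuff with $n$ validators, if there is a safety violation (COMMIT quorum certificates exist for two conflicting blocks), then one can identify at least $n/3$ validators each of which has violated one of the HotStuff slashing conditions.
   Context: HotStuff: execution proceeds in views, each with a leader. Votes carry a block, a view number and a type among PREPARE, PRE-COMMIT, COMMIT. A quorum certificate (QC) is a collection of at least $2n/3$ votes of the same type, view and block. In each view the leader proposes a block justified by the highest PREPARE QC it knows; validators vote PREPARE for the proposal only if it is safe (the safeNode rule: it extends the block the validator is locked on, or its justifying PREPARE QC has a higher view than the lock); given a PREPARE QC the validators vote PRE-COMMIT, and upon a PRE-COMMIT QC for a block a validator locks on it and votes COMMIT; a block is decided once it has a COMMIT QC. HotStuff slashing conditions: a validator violates a slashing condition if (1) it votes more than once for the same type and the same view, or (2) it votes COMMIT for a block $B_1$ in view $v_1$ and later votes PREPARE for a block $B_2$ conflicting with $B_1$ in a view $v_2>v_1$, unless there has been a PREPARE QC for a block conflicting with $B_1$ in some view $v$ with $v_1<v<v_2$. *)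

(* Defs.v *)
From mathcomp Require Import all_boot.
Set Implicit Arguments.
Unset Strict Implicit.
Unset Printing Implicit Defensive.

Inductive vtype := PREPARE | PRECOMMIT | COMMIT.

Section HotStuff.
Variable Block : Type.
Variable parent : Block -> option Block.

(* b extends a: a is an ancestor of b (or b itself) in the block tree. *)
Definition extends (b a : Block) : Prop :=
  exists k, iter k (fun o => obind parent o) (Some b) = Some a.

Definition conflicting (a b : Block) : Prop := ~ extends a b /\ ~ extends b a.

Variable V : finType.  (* the validators; n = #|V| *)
(* voted i t v B : validator i has cast a vote of type t in view v for block B *)
Variable voted : V -> vtype -> nat -> Block -> Prop.

Definition QC (t : vtype) (v : nat) (B : Block) : Prop :=
  exists Q : {set V}, 2 * #|V| <= 3 * #|Q| /\ forall i, i \in Q -> voted i t v B.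

Definition slash1 (i : V) : Prop :=
  exists t v B B', B <> B' /\ voted i t v B /\ voted i t v B'.

Definition slash2 (i : V) : Prop :=
  exists v1 B1 v2 B2,
    voted i COMMIT v1 B1 /\ voted i PREPARE v2 B2 /\ conflicting B2 B1 /\ v1 < v2 /\
    ~ (exists v B, v1 < v < v2 /\ conflicting B B1 /\ QC PREPARE v B).

Definition violates (i : V) : Prop := slash1 i \/ slash2 i.

(* Well-formedness of votes (HotStuff message validity): a PRE-COMMIT vote
   for B in view v is accompanied by a PREPARE QC for B in v, and a COMMIT
   vote by a PRE-COMMIT QC for B in v. *)
Definition justified_votes : Prop :=
  (forall i v B, voted i PRECOMMIT v B -> QC PREPARE v B) /\
  (forall i v B, voted i COMMIT v B -> QC PRECOMMIT v B).

End HotStuff.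

(* Main.v *)
Require Import Defs.
From mathcomp Require Import all_boot.
From mathcomp Require Import zify.
From Stdlib Require Import Classical.

Lemma inter_big (V : finType) (Q1 Q2 : {set V}) :
  2 * #|V| <= 3 * #|Q1| -> 2 * #|V| <= 3 * #|Q2| -> #|V| <= 3 * #|Q1 :&: Q2|.
Proof.
move=> h1 h2; have hE := cardsU Q1 Q2.
have hU : #|Q1 :|: Q2| <= #|V| by apply: max_card.
lia.
Qed.

Lemma min_ex (P : nat -> Prop) n : P n -> exists m, P m /\ forall k, k < m -> ~ P k.
Proof.
elim: n {-2}n (leqnn n) => [|N IH] n hn Pn.
  exists n; split => // k hk; lia.
case: (classic (exists k, k < n /\ P k)) => [[k [hk Pk]]|H].
  apply: (IH k) => //; lia.
exists n; split => // k hk Pk; apply: H; by exists k.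
Qed.

Lemma key (Block : Type) (parent : Block -> option Block) (V : finType)
  (voted : V -> vtype -> nat -> Block -> Prop) :
  justified_votes voted -> 0 < #|V| ->
  forall v1 B1 v2 B2, conflicting parent B1 B2 ->
     QC voted COMMIT v1 B1 -> QC voted COMMIT v2 B2 -> v1 <= v2 ->
  exists S : {set V}, #|V| <= 3 * #|S| /\
    forall i, i \in S -> violates parent voted i.
Proof.
move=> [J1 J2] n0 v1 B1 v2 B2 [c1 c2] [Q1 [hQ1 vQ1]] [Q2 [hQ2 vQ2]].
rewrite leq_eqVlt => /orP [/eqP ev|lt].
  subst v2; exists (Q1 :&: Q2); split; first exact: inter_big.
  move=> i; rewrite inE => /andP [i1 i2]; left.
  exists COMMIT, v1, B1, B2; split; last by split; [apply: vQ1|apply: vQ2].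
  move=> e; subst B2; apply: c1; by exists 0.
have [i iQ2] : exists i, i \in Q2.
  apply/set0Pn; rewrite -card_gt0; lia.
have [Qp [hQp vQp]] := J2 _ _ _ (vQ2 _ iQ2).
have [j jQp] : exists j, j \in Qp.
  apply/set0Pn; rewrite -card_gt0; lia.
have qc2 := J1 _ _ _ (vQp _ jQp).
pose P v := exists B, v1 < v /\ conflicting parent B B1 /\ QC voted PREPARE v B.
have P2 : P v2 by exists B2; split => //; split => //; split.
have [m [[Bm [hm [cm [Qm [hQm vQm]]]]] mmin]] := min_ex _ _ P2.
exists (Q1 :&: Qm); split; first exact: inter_big.
move=> k; rewrite inE => /andP [k1 k2]; right.
exists v1, B1, m, Bm; split; first by apply: vQ1.
split; first by apply: vQm.
split; first exact: cm.
split; first exact: hm.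
move=> [v [B [/andP [a b] [cB qB]]]]; apply: (mmin v b); exists B; split => //.
Qed.

Theorem lemma3 (Block : Type) (parent : Block -> option Block) (V : finType)
  (voted : V -> vtype -> nat -> Block -> Prop) :
  justified_votes voted ->
  (exists v1 B1 v2 B2, conflicting parent B1 B2 /\
     QC voted COMMIT v1 B1 /\ QC voted COMMIT v2 B2) ->
  exists S : {set V}, #|V| <= 3 * #|S| /\
    forall i, i \in S -> violates parent voted i.
Proof.
move=> J [v1 [B1 [v2 [B2 [c [q1 q2]]]]]].
case: (posnP #|V|) => [->|n0].
  by exists set0; split => // i; rewrite inE.
case: (leqP v1 v2) => h.
  exact (@key _ _ _ _ J n0 _ _ _ _ c q1 q2 h).
apply: (@key _ _ _ _ J n0 _ _ _ _ _ q2 q1); last exact: ltnW.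
by case: c => a b; split.
Qed.
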